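(* Let $(\Phi,\Gamma,D)$ be a domain-free s-continuous information algebra. Then for every $\phi\in\Phi$ and every $x\in D$, the set $\{\psi\in\Gamma:\ \psi^{\Rightarrow x}=\psi\ll\phi\}$ is directed. Similarly, if $(\Phi,\Gamma,D)$ is a domain-free continuous information algebra, then for every $\phi\in\Phi$ the set $\{\psi\in\Gamma:\ \psi\ll\phi\}$ is directed.
   Context: A domain-free information algebra $(\Phi,D)$ consists of a set $\Phi$, a lattice $D$, a combination $\otimes:\Phi\times\Phi\to\Phi$ and a focusing $\Phi\times D\to\Phi$, $(\psi,x)\mapsto\psi^{\Rightarrow x}$, such that: (1) $\otimes$ is associative and commutative and has a neutral element $e$ (the empty information); (2) $(\psi^{\Rightarrow y})^{\Rightarrow x}=\psi^{\Rightarrow x\wedge y}$ for all $\psi,x,y$; (3) $(\phi^{\Rightarrow x}\otimes\psi)^{\Rightarrow x}=\phi^{\Rightarrow x}\otimes\psi^{\Rightarrow x}$; (4) for every $\psi$ there is $x\in D$ with $\psi^{\Rightarrow x}=\psi$; (5) $\psi\otimes\psi^{\Rightarrow x}=\psi$. $\Phi$ is partially ordered by $\psi\le\phi$ iff $\psi\otimes\phi=\phi$; all suprema $\vee$ are taken with respect to this order. In a poset, $a\ll b$ ($a$ way-below $b$) means: for every directed set $X$ with $b\le\vee X$ there is $c\in X$ with $a\le c$. A domain-free continuous (resp. s-continuous) information algebra is a triple $(\Phi,\Gamma,D)$ where $(\Phi,D)$ is a domain-free information algebra, $D$ has a top element, $\Gamma\subseteq\Phi$ is closed under combination and contains $e$,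 and: (convergency) every directed $X\subseteq\Gamma$ has a supremum $\vee X$ in $\Phi$; (density) $\phi=\vee\{\psi\in\Gamma:\psi\ll\phi\}$ for all $\phi\in\Phi$ (resp. (strong density) $\phi^{\Rightarrow x}=\vee\{\psi\in\Gamma:\psi=\psi^{\Rightarrow x}\ll\phi\}$ for all $\phi\in\Phi$, $x\in D$). *)

(* Defs.v *)
From HB Require Import structures.
From mathcomp Require Import all_boot all_order.
Set Implicit Arguments. Unset Strict Implicit. Unset Printing Implicit Defensive.
Import Order.TTheory.
Local Open Scope order_scope.

Section InfoAlgebra.
Context {d : Order.disp_t} (D : latticeType d) (Phi : Type)
  (comb : Phi -> Phi -> Phi) (e : Phi) (foc : Phi -> D -> Phi).

Definition info_algebra : Prop :=
  [/\ (forall a b c, comb a (comb b c) = comb (comb a b) c),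
      (forall a b, comb a b = comb b a) & (forall a, comb e a = a)] /\
  [/\ (forall psi x y, foc (foc psi y) x = foc psi (x `&` y)),
      (forall phi psi x,
         foc (comb (foc phi x) psi) x = comb (foc phi x) (foc psi x)),
      (forall psi, exists x, foc psi x = psi)
    & (forall psi x, comb psi (foc psi x) = psi)].

Definition ile (psi phi : Phi) : Prop := comb psi phi = phi.

Definition is_sup (X : Phi -> Prop) (s : Phi) : Prop :=
  (forall a, X a -> ile a s) /\ (forall u, (forall a, X a -> ile a u) -> ile s u).

Definition directed (X : Phi -> Prop) : Prop :=
  (exists a, X a) /\
  (forall a b, X a -> X b -> exists c, [/\ X c, ile a c & ile b c]).

Definition way_below (a b : Phi) : Prop :=
  forall X : Phi -> Prop, directed X ->
  forall s, is_sup X s -> ile b s -> exists c, X c /\ ile a c.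

Definition convergency (Gamma : Phi -> Prop) : Prop :=
  forall X : Phi -> Prop, directed X -> (forall a, X a -> Gamma a) ->
  exists s, is_sup X s.

Definition density (Gamma : Phi -> Prop) : Prop :=
  forall phi, is_sup (fun psi => Gamma psi /\ way_below psi phi) phi.

Definition strong_density (Gamma : Phi -> Prop) : Prop :=
  forall phi x,
    is_sup (fun psi => Gamma psi /\ foc psi x = psi /\ way_below psi phi) (foc phi x).

Definition gamma_closed (Gamma : Phi -> Prop) : Prop :=
  (forall a b, Gamma a -> Gamma b -> Gamma (comb a b)) /\ Gamma e.

End InfoAlgebra.

(* (Phi, Gamma, D) domain-free continuous / s-continuous information algebra;
   D is required to have a top element, hence D : tLatticeType. *)
Definition continuous_info_algebra {d : Order.disp_t} (D : tLatticeType d)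
  (Phi : Type) (comb : Phi -> Phi -> Phi) (e : Phi) (foc : Phi -> D -> Phi)
  (Gamma : Phi -> Prop) : Prop :=
  [/\ info_algebra comb e foc, gamma_closed comb e Gamma,
      convergency comb Gamma & density comb Gamma].

Definition s_continuous_info_algebra {d : Order.disp_t} (D : tLatticeType d)
  (Phi : Type) (comb : Phi -> Phi -> Phi) (e : Phi) (foc : Phi -> D -> Phi)
  (Gamma : Phi -> Prop) : Prop :=
  [/\ info_algebra comb e foc, gamma_closed comb e Gamma,
      convergency comb Gamma & strong_density comb foc Gamma].

(* Main.v *)
Require Import Defs.
From mathcomp Require Import all_boot all_order.

Section Aux.
Context {d : Order.disp_t} (D : latticeType d) (Phi : Type)
  (comb : Phi -> Phi -> Phi) (e : Phi) (foc : Phi -> D -> Phi).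
Hypothesis H : info_algebra comb e foc.

Lemma idem a : comb a a = a.
Proof.
case: H => _ [_ _ H4 H5]. case: (H4 a) => x Hx.
have h := H5 a x. rewrite Hx in h. exact: h.
Qed.

Lemma ile_trans a b c : ile comb a b -> ile comb b c -> ile comb a c.
Proof.
case: H => [[A C N] _]. rewrite /ile => h1 h2.
by rewrite -h2 A h1.
Qed.

Lemma ile_e a : ile comb e a.
Proof. by case: H => [[A C N] _]; apply: N. Qed.

Lemma ile_combl a b : ile comb a (comb a b).
Proof. by case: H => [[A C N] _]; rewrite /ile A idem. Qed.

Lemma ile_combr a b : ile comb b (comb a b).
Proof. by case: H => [[A C N] _]; rewrite C; apply: ile_combl. Qed.

Lemma comb_lub a b c : ile comb a c -> ile comb b c -> ile comb (comb a b) c.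
Proof. case: H => [[A C N] _]; rewrite /ile => h1 h2. by rewrite -A h2. Qed.

Lemma wb_e phi : way_below comb e phi.
Proof.
move=> X [[c Xc] _] s _ _. by exists c; split => //; apply: ile_e.
Qed.

Lemma wb_comb a b phi : way_below comb a phi -> way_below comb b phi ->
  way_below comb (comb a b) phi.
Proof.
move=> ha hb X dX s hs hp.
case: (ha X dX s hs hp) => c1 [X1 l1].
case: (hb X dX s hs hp) => c2 [X2 l2].
case: dX => _ dX. case: (dX c1 c2 X1 X2) => c3 [X3 l13 l23].
exists c3; split => //. apply: comb_lub.
- exact: ile_trans l1 l13.
- exact: ile_trans l2 l23.
Qed.

Lemma foc_e x : foc e x = e.
Proof. case: H => [[A C N] [_ _ _ H5]]. by have := H5 e x; rewrite N. Qed.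

Lemma foc_comb a b x : foc a x = a -> foc b x = b -> foc (comb a b) x = comb a b.
Proof.
case: H => [_ [_ H3 _ _]] ha hb. by have := H3 a b x; rewrite ha hb.
Qed.
End Aux.

Theorem proposition3p5 :
  (forall (d : Order.disp_t) (D : tLatticeType d) (Phi : Type)
     (comb : Phi -> Phi -> Phi) (e : Phi) (foc : Phi -> D -> Phi)
     (Gamma : Phi -> Prop),
     s_continuous_info_algebra comb e foc Gamma ->
     forall (phi : Phi) (x : D),
       directed comb
         (fun psi => Gamma psi /\ foc psi x = psi /\ way_below comb psi phi)) /\
  (forall (d : Order.disp_t) (D : tLatticeType d) (Phi : Type)
     (comb : Phi -> Phi -> Phi) (e : Phi) (foc : Phi -> D -> Phi)
     (Gamma : Phi -> Prop),
     continuous_info_algebra comb e foc Gamma ->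
     forall phi : Phi,
       directed comb (fun psi => Gamma psi /\ way_below comb psi phi)).
Proof.
split.
- move=> d D Phi comb e foc Gamma [HI [Gc Ge] _ _] phi x; split.
  + exists e; split; first by []. split; [exact: (@foc_e _ _ _ _ _ _ HI x) | exact: (@wb_e _ _ _ _ _ _ HI)].
  + move=> a b [Ga [Fa Wa]] [Gb [Fb Wb]]; exists (comb a b); split.
    * split; first exact: Gc. split; [exact: (@foc_comb _ _ _ _ _ _ HI)|exact: (@wb_comb _ _ _ _ _ _ HI)].
    * exact: (@ile_combl _ _ _ _ _ _ HI).
    * exact: (@ile_combr _ _ _ _ _ _ HI).
- move=> d D Phi comb e foc Gamma [HI [Gc Ge] _ _] phi; split.
  + exists e; split => //; exact: (@wb_e _ _ _ _ _ _ HI).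
  + move=> a b [Ga Wa] [Gb Wb]; exists (comb a b); split.
    * split; first exact: Gc. exact: (@wb_comb _ _ _ _ _ _ HI).
    * exact: (@ile_combl _ _ _ _ _ _ HI).
    * exact: (@ile_combr _ _ _ _ _ _ HI).
Qed.
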